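(* Let $\Lambda>0$ and let $a_0,b_0>0$ be constants. Put $\theta(x^8)=\sqrt{2\Lambda}\,x^8$ and let $U\subset\mathbb{R}^8$ be the open set of points $(x^1,\dots,x^8)$ with $\sin\theta(x^8)\neq 0$. For either choice of the sign $\epsilon\in\{+1,-1\}$ and either choice of the sign $\sigma\in\{+1,-1\}$, define on $U$ $$a(x^4,x^8)=a_0\,e^{\epsilon\frac13\sqrt{\Lambda/2}\,x^4}\,\big(\sin^2\theta(x^8)\big)^{1/12},\qquad b(x^4,x^8)=b_0\,e^{-\epsilon\frac13\sqrt{\Lambda/2}\,x^4}\,\big(\sin^2\theta(x^8)\big)^{1/12},$$ $$\varphi(x^4,x^8)=\sigma\,\tfrac12\sqrt{\tfrac56}\,\ln\!\Big[\tan^2\!\big(\tfrac12\theta(x^8)\big)\Big].$$ Then the metric $$ds^2=a^2\big[(dx^1)^2+(dx^2)^2+(dx^3)^2\big]-(dx^4)^2-b^2\big[(dx^5)^2+(dx^6)^2+(dx^7)^2\big]+(dx^8)^2$$ together with the scalar field $\varphi$ satisfies on $U$ the coupled Einstein–massless-scalar field equations $$G_{\mu\nu}+\Lambda g_{\mu\nu}=T_{\mu\nu},\qquad T_{\mu\nu}=\partial_\mu\varphi\,\partial_\nu\varphi-\tfrac12 g_{\mu\nu}\,g^{\alpha\beta}\partial_\alpha\varphi\,\partial_\beta\varphi,\qquad \frac{1}{\sqrt{|\det g|}}\,\partial_\mu\!\Big(\sqrt{|\det g|}\,g^{\mu\nu}\partial_\nu\varphi\Big)=0 .$$ Moreover,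 for this solution the relative expansion rate $\ell=\tfrac12\,\partial_{x^4}\ln(b/a)$ equals the constant $-\epsilon\,\tfrac13\sqrt{\Lambda/2}$, and the functions $a,b,\varphi$ are periodic in $x^8$ with common minimal positive period $\pi\sqrt{2/\Lambda}$ (so this common period equals $2\pi$ exactly when $\Lambda=\tfrac12$).
   Context: Coordinates $(x^1,\dots,x^8)$ on (an open subset of) $\mathbb{R}^8$; the metric has signature $(4,4)$, with $x^1,x^2,x^3,x^8$ spacelike and $x^4,\dots,x^7$ timelike. $G_{\mu\nu}=R_{\mu\nu}-\tfrac12 R\,g_{\mu\nu}$ is the Einstein tensor of the Levi-Civita connection of $g$, with the Landau–Lifshitz (MTW ''spacelike'') sign conventions for the Riemann and Ricci tensors. Units are chosen with $8\pi\mathbb{G}=1$. $\Lambda$ is the cosmological constant. The scalar field $\varphi$ is real, massless, minimally coupled, with zero potential (action density $\sqrt{|\det g|}\,[\tfrac12(R-2\Lambda)-\tfrac12 g^{\mu\nu}\partial_\mu\varphi\,\partial_\nu\varphi]$). *)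

(* Defs.v *)
From HB Require Import structures.
From mathcomp Require Import all_boot all_order all_algebra.
From mathcomp Require Import all_classical all_reals all_analysis.
Set Implicit Arguments. Unset Strict Implicit. Unset Printing Implicit Defensive.
Import Order.TTheory GRing.Theory Num.Theory.
Import numFieldNormedType.Exports.
Local Open Scope classical_set_scope.
Local Open Scope ring_scope.

(* Points of R^8 are row vectors; coordinate x^(k+1) is  x 0 k  with k : 'I_8. *)
Definition ev {R : realType} (i : 'I_8) : 'rV[R]_8 := delta_mx 0 i.

Definition partial {R : realType} (i : 'I_8) (f : 'rV[R]_8 -> R) (x : 'rV[R]_8) : R :=
  derive1 (fun t : R => f (x + t *: ev i)) 0.

Definition partially_derivable {R : realType} (i : 'I_8) (f : 'rV[R]_8 -> R)
  (x : 'rV[R]_8) : Prop :=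
  derivable (fun t : R => f (x + t *: ev i)) 0 1.

Definition twice_partially_derivable_on {R : realType} (U : set 'rV[R]_8)
  (f : 'rV[R]_8 -> R) : Prop :=
  forall x, U x -> forall i j : 'I_8,
    partially_derivable i f x /\ partially_derivable i (partial j f) x.

Section Geometry.
Variable R : realType.
Variable g : 'rV[R]_8 -> 'M[R]_8.

Definition ginv (x : 'rV[R]_8) : 'M[R]_8 := invmx (g x).

Definition christoffel (l m n : 'I_8) (x : 'rV[R]_8) : R :=
  2^-1 * \sum_(s < 8) ginv x l s *
    (partial m (fun y => g y s n) x + partial n (fun y => g y s m) x
     - partial s (fun y => g y m n) x).

(* Landau-Lifshitz / MTW:
   R^a_{b c d} = d_c Gamma^a_{b d} - d_d Gamma^a_{b c}
                 + Gamma^a_{c l} Gamma^l_{b d} - Gamma^a_{d l} Gamma^l_{b c} *)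
Definition riemann (a b c d : 'I_8) (x : 'rV[R]_8) : R :=
  partial c (christoffel a b d) x - partial d (christoffel a b c) x
  + \sum_(l < 8) (christoffel a c l x * christoffel l b d x
                  - christoffel a d l x * christoffel l b c x).

Definition ricci (b d : 'I_8) (x : 'rV[R]_8) : R :=
  \sum_(a < 8) riemann a b a d x.

Definition scalar_curv (x : 'rV[R]_8) : R :=
  \sum_(m < 8) \sum_(n < 8) ginv x m n * ricci m n x.

Definition einstein (m n : 'I_8) (x : 'rV[R]_8) : R :=
  ricci m n x - 2^-1 * scalar_curv x * g x m n.

Definition stress (phi : 'rV[R]_8 -> R) (m n : 'I_8) (x : 'rV[R]_8) : R :=
  partial m phi x * partial n phi x
  - 2^-1 * g x m n *
    \sum_(a < 8) \sum_(b < 8) ginv x a b * partial a phi x * partial b phi x.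

Definition box (phi : 'rV[R]_8 -> R) (x : 'rV[R]_8) : R :=
  (Num.sqrt `|\det (g x)|)^-1 *
  \sum_(m < 8) partial m
     (fun y => Num.sqrt `|\det (g y)| * \sum_(n < 8) ginv y m n * partial n phi y) x.

End Geometry.

Definition i4 : 'I_8 := inord 3.
Definition i8 : 'I_8 := inord 7.

Definition sol_theta {R : realType} (L : R) (x : 'rV[R]_8) : R :=
  Num.sqrt (2 * L) * x 0 i8.

Definition sol_U {R : realType} (L : R) : set 'rV[R]_8 :=
  [set x | sin (sol_theta L x) != 0].

Definition sol_a {R : realType} (L a0 eps : R) (x : 'rV[R]_8) : R :=
  a0 * expR (eps * 3^-1 * Num.sqrt (L / 2) * x 0 i4)
     * powR (sin (sol_theta L x) ^+ 2) (12^-1).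

Definition sol_b {R : realType} (L b0 eps : R) (x : 'rV[R]_8) : R :=
  b0 * expR (- (eps * 3^-1 * Num.sqrt (L / 2) * x 0 i4))
     * powR (sin (sol_theta L x) ^+ 2) (12^-1).

Definition sol_phi {R : realType} (L sigma : R) (x : 'rV[R]_8) : R :=
  sigma * 2^-1 * Num.sqrt (5 / 6) * ln (tan (2^-1 * sol_theta L x) ^+ 2).

Definition sol_metric {R : realType} (L a0 b0 eps : R) (x : 'rV[R]_8) : 'M[R]_8 :=
  \matrix_(i, j)
    (if i == j then
       (if (val i < 3)%N then sol_a L a0 eps x ^+ 2
        else if (val i == 3)%N then -1
        else if (val i < 7)%N then - sol_b L b0 eps x ^+ 2
        else 1)
     else 0).

(* Main.v *)
Require Import Defs.
From HB Require Import structures.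
From mathcomp Require Import all_boot all_order all_algebra.
From mathcomp Require Import all_classical all_reals all_analysis.
From mathcomp Require Import ring lra.
Import Order.TTheory GRing.Theory Num.Theory.
Import numFieldNormedType.Exports.
Local Open Scope classical_set_scope.
Local Open Scope ring_scope.


Set Implicit Arguments. Unset Strict Implicit. Unset Printing Implicit Defensive.

Section PDsec.
Variable R : realType.
Implicit Types (f g : 'rV[R]_8 -> R) (x : 'rV[R]_8).

Definition PD (i : 'I_8) f x (df : R) :=
  is_derive (0:R) (1:R) (fun t : R => f (x + t *: ev i)) df.

Lemma line0 (i : 'I_8) x : x + (0:R) *: ev i = x.
Proof. by rewrite scale0r addr0. Qed.

Lemma PD_partial i f x df : PD i f x df -> partial i f x = df.
Proof. by move=> H; rewrite /partial derive1E; apply: derive_val. Qed.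

Lemma PD_derivable i f x df : PD i f x df -> partially_derivable i f x.
Proof. by case. Qed.

Lemma PD_eq i f x df df' : PD i f x df -> df = df' -> PD i f x df'.
Proof. by move=> ? <-. Qed.

Lemma PD_cst i (c : R) x : PD i (fun=> c) x 0.
Proof. exact: is_derive_cst. Qed.

Lemma PD_add i f g x df dg : PD i f x df -> PD i g x dg ->
  PD i (fun y => f y + g y) x (df + dg).
Proof. move=> Hf Hg; exact: is_deriveD. Qed.

Lemma PD_opp i f x df : PD i f x df -> PD i (fun y => - f y) x (- df).
Proof. move=> Hf; exact: is_deriveN. Qed.

Lemma PD_sub i f g x df dg : PD i f x df -> PD i g x dg ->
  PD i (fun y => f y - g y) x (df - dg).
Proof. move=> Hf Hg; exact: is_deriveB. Qed.

Lemma PD_mul i f g x df dg : PD i f x df -> PD i g x dg ->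
  PD i (fun y => f y * g y) x (df * g x + f x * dg).
Proof.
move=> Hf Hg; have H := is_deriveM Hf Hg.
rewrite /= !line0 in H.
rewrite /PD; have -> : (fun t : R => f (x + t *: ev i) * g (x + t *: ev i)) =
  ((fun t : R => f (x + t *: ev i)) * (fun t : R => g (x + t *: ev i))) by [].
apply: (is_derive_eq H).
by rewrite /GRing.scale /= addrC mulrC.
Qed.

Lemma PD_comp i f x df (h : R -> R) dh :
  PD i f x df -> is_derive (f x) 1 h dh -> PD i (fun y => h (f y)) x (dh * df).
Proof.
move=> Hf Hh; rewrite /PD.
have Hh' : is_derive ((fun t : R => f (x + t *: ev i)) 0) 1 h dh by rewrite /= line0.
exact: (is_derive1_comp Hh' Hf).
Qed.

Lemma PD_inv i f x df : f x != 0 -> PD i f x df ->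
  PD i (fun y => (f y)^-1) x (- (f x)^-2 * df).
Proof.
move=> fx Hf; have fx' : (fun t : R => f (x + t *: ev i)) 0 != 0 by rewrite /= line0.
have := is_deriveV fx' Hf; rewrite /= line0 => H; exact: H.
Qed.

Lemma PD_near i f g x df :
  (\forall t \near (0:R), f (x + t *: ev i) = g (x + t *: ev i)) ->
  PD i f x df -> PD i g x df.
Proof. move=> H Hf; exact: (near_eq_is_derive H Hf). Qed.

Lemma ev_coord (i j : 'I_8) x (t : R) :
  (x + t *: ev i) 0 j = x 0 j + (if i == j then t else 0).
Proof.
rewrite /ev !mxE eqxx /= (eq_sym j i).
by case: (i == j); rewrite ?mulr1 ?mulr0.
Qed.

Lemma PD_coord i (j : 'I_8) x : PD i (fun y => y 0 j) x (if i == j then 1 else 0).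
Proof.
rewrite /PD.
have -> : (fun t : R => (x + t *: ev i) 0 j) = (fun t => x 0 j + (if i == j then t else 0)).
  by apply/funext => t; rewrite ev_coord.
case: (i == j).
  have -> : (fun t : R => x 0 j + t) = (cst (x 0 j) + id) by [].
  apply: (is_derive_eq (is_deriveD (is_derive_cst (x 0 j) (0:R) (1:R)) (is_derive_id (0:R) (1:R)))).
  by rewrite add0r.
have -> : (fun t : R => x 0 j + 0) = (cst (x 0 j + 0)) by [].
exact: is_derive_cst.
Qed.

End PDsec.


Section Alg.
Variable R : realFieldType.

Definition gdN (A B : R) (n : nat) : R :=
  if Nat.ltb n 3 then A else if Nat.eqb n 3 then -1 else if Nat.ltb n 7 then - B else 1.

Definition dgdN (A B k q al : R) (m n : nat) : R :=
  if Nat.eqb m 3 then (if Nat.ltb n 3 then 2*al*A else if (Nat.leb 4 n && Nat.ltb n 7) then 2*al*B else 0)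
  else if Nat.eqb m 7 then (if Nat.ltb n 3 then k*q/3*A else if (Nat.leb 4 n && Nat.ltb n 7) then -(k*q/3*B) else 0)
  else 0.

Definition ddgdN (A B k q al : R) (c m n : nat) : R :=
  if Nat.eqb m 3 then
    (if Nat.ltb n 3 then (if Nat.eqb c 3 then 4*al^+2*A else if Nat.eqb c 7 then 2*al*(k*q/3)*A else 0)
     else if (Nat.leb 4 n && Nat.ltb n 7) then (if Nat.eqb c 3 then -(4*al^+2*B) else if Nat.eqb c 7 then 2*al*(k*q/3)*B else 0)
     else 0)
  else if Nat.eqb m 7 then
    (if Nat.ltb n 3 then (if Nat.eqb c 3 then k*q/3*(2*al*A) else if Nat.eqb c 7 then k/3*((-k*(1+q^+2))*A+q*(k*q/3)*A) else 0)
     else if (Nat.leb 4 n && Nat.ltb n 7) then (if Nat.eqb c 3 then -(k*q/3*(-(2*al*B))) else if Nat.eqb c 7 then -(k/3*((-k*(1+q^+2))*B+q*(k*q/3)*B)) else 0)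
     else 0)
  else 0.

Definition brk (A B k q al : R) (l m n : nat) : R :=
  (if Nat.eqb l n then dgdN A B k q al m l else 0) + (if Nat.eqb l m then dgdN A B k q al n l else 0)
  - (if Nat.eqb m n then dgdN A B k q al l m else 0).

Definition dbrk (A B k q al : R) (c l m n : nat) : R :=
  (if Nat.eqb l n then ddgdN A B k q al c m l else 0) + (if Nat.eqb l m then ddgdN A B k q al c n l else 0)
  - (if Nat.eqb m n then ddgdN A B k q al c l m else 0).

Definition GN (A B k q al : R) (l m n : nat) : R := (2 * gdN A B l)^-1 * brk A B k q al l m n.

Definition dGN (A B k q al : R) (c l m n : nat) : R :=
  - (2 * dgdN A B k q al c l) / (2 * gdN A B l)^+2 * brk A B k q al l m n +
  (2 * gdN A B l)^-1 * dbrk A B k q al c l m n.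

Definition sum8 (F : nat -> R) := F 0%N + F 1%N + F 2%N + F 3%N + F 4%N + F 5%N + F 6%N + F 7%N.

Definition RiemN (A B k q al : R) (a b c d : nat) : R :=
  dGN A B k q al c a b d - dGN A B k q al d a b c +
  sum8 (fun l => GN A B k q al a c l * GN A B k q al l b d - GN A B k q al a d l * GN A B k q al l b c).

Definition RicN (A B k q al : R) (b d : nat) : R := sum8 (fun a => RiemN A B k q al a b a d).

Definition RicC (A B r q : R) (b d : nat) : R :=
  if Nat.eqb b d then (2 * r^+2)/3 * gdN A B b + (if Nat.eqb b 7 then 5 * (2 * r^+2) / 3 * (1 + q^+2) else 0) else 0.

Lemma ric_all (A B k q al r : R) (hA : A != 0) (hB : B != 0) (hk : k = 2 * r)
  (hal : al = r / 3 \/ al = - (r / 3)) b d :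
  (b < 8)%N -> (d < 8)%N -> RicN A B k q al b d = RicC A B r q b d.
Proof.
subst k.
case: b => [|[|[|[|[|[|[|[|b]]]]]]]] // _; case: d => [|[|[|[|[|[|[|[|d]]]]]]]] // _.
all: cbv beta iota zeta delta [RicN RiemN RicC sum8 dGN GN brk dbrk gdN dgdN ddgdN Nat.eqb Nat.ltb Nat.leb andb].
all: case: hal => ->.
all: by field; rewrite ?hA ?hB.
Qed.

End Alg.


Section Sol.
Variable R : realType.
Variables (L a0 b0 eps sigma : R).
Hypotheses (hL : 0 < L) (ha0 : 0 < a0) (hb0 : 0 < b0).
Implicit Types (x y : 'rV[R]_8).

Definition kk : R := Num.sqrt (2 * L).
Definition al : R := eps * 3^-1 * Num.sqrt (L / 2).
Definition SS y := sin (sol_theta L y).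
Definition CC y := cos (sol_theta L y).
Definition QQ y := CC y / SS y.
Definition Pw y := powR (SS y ^+ 2) (12^-1).
Definition E1 y := expR (al * y 0 i4).
Definition E2 y := expR (- (al * y 0 i4)).
Definition sa y := sol_a L a0 eps y.
Definition sb y := sol_b L b0 eps y.

Lemma saE y : sa y = a0 * E1 y * Pw y. Proof. by []. Qed.
Lemma sbE y : sb y = b0 * E2 y * Pw y. Proof. by []. Qed.

Definition dl (i j : 'I_8) (v : R) := if i == j then v else 0.

Lemma i48 : (i4 == i8) = false.
Proof. by rewrite /i4 /i8 -val_eqE /= !inordK. Qed.

Lemma PD_theta i x : PD i (sol_theta L) x (dl i i8 kk).
Proof.
rewrite /sol_theta; apply: PD_eq.
  apply: PD_mul; [exact: PD_cst | exact: PD_coord].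
by rewrite /dl mul0r add0r; case: (i == i8); rewrite ?mulr1 ?mulr0.
Qed.

Lemma PD_S i x : PD i SS x (dl i i8 (kk * CC x)).
Proof.
apply: PD_eq; first exact: (PD_comp (PD_theta i x) (is_derive_sin _)).
by rewrite /dl /CC; case: (i == i8); rewrite ?mulr0 // mulrC.
Qed.

Lemma PD_C i x : PD i CC x (dl i i8 (- (kk * SS x))).
Proof.
apply: PD_eq; first exact: (PD_comp (PD_theta i x) (is_derive_cos _)).
by rewrite /dl /SS; case: (i == i8); rewrite ?mulr0 // mulrC mulrN.
Qed.

Lemma PD_Q i x : SS x != 0 -> PD i QQ x (dl i i8 (- kk * (1 + QQ x ^+ 2))).
Proof.
move=> hS; apply: PD_eq; first exact: (PD_mul (PD_C i x) (PD_inv hS (PD_S i x))).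
rewrite /dl /QQ; case: (i == i8); last by rewrite !mulr0 mul0r add0r.
by field.
Qed.

Lemma PD_Pw i x : SS x != 0 -> PD i Pw x (dl i i8 (kk * QQ x / 6 * Pw x)).
Proof.
move=> hS; have hS2 : 0 < SS x ^+ 2 by rewrite exprn_even_gt0.
have := PD_comp (PD_mul (PD_S i x) (PD_S i x)) (is_derive1_powR (12^-1) hS2).
move=> H; apply: PD_eq.
  exact: H.
rewrite /dl /QQ /Pw; case: (i == i8); last by rewrite !(mulr0, mul0r, addr0, add0r).
rewrite powRB; last by rewrite (gt_eqF hS2) implybT.
rewrite powRr1; last exact: ltW.
by field.
Qed.

Lemma PD_E1 i x : PD i E1 x (dl i i4 (al * E1 x)).
Proof.
apply: PD_eq; first exact: (PD_comp (PD_mul (PD_cst i al x) (PD_coord i i4 x)) (is_derive_expR _)).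
by rewrite /dl /E1; case: (i == i4); ring.
Qed.

Lemma PD_E2 i x : PD i E2 x (dl i i4 (- al * E2 x)).
Proof.
apply: PD_eq; first exact: (PD_comp (PD_opp (PD_mul (PD_cst i al x) (PD_coord i i4 x))) (is_derive_expR _)).
by rewrite /dl /E2; case: (i == i4); ring.
Qed.


Definition du (i : 'I_8) (vu vv : R) := if i == i4 then vu else if i == i8 then vv else 0.

Lemma PD_sa i x : SS x != 0 -> PD i sa x (du i al (kk * QQ x / 6) * sa x).
Proof.
move=> hS; have H := PD_mul (PD_mul (PD_cst i a0 x) (PD_E1 i x)) (PD_Pw i hS).
apply: PD_eq; first exact: H.
rewrite /du /dl saE; have [->|n4] := eqVneq i i4; first by rewrite ?eqxx i48; ring.
by rewrite ?(negPf n4); case: (i == i8); ring.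
Qed.

Lemma PD_sb i x : SS x != 0 -> PD i sb x (du i (- al) (kk * QQ x / 6) * sb x).
Proof.
move=> hS; have H := PD_mul (PD_mul (PD_cst i b0 x) (PD_E2 i x)) (PD_Pw i hS).
apply: PD_eq; first exact: H.
rewrite /du /dl sbE; have [->|n4] := eqVneq i i4; first by rewrite ?eqxx i48; ring.
by rewrite ?(negPf n4); case: (i == i8); ring.
Qed.

Definition Aa y := sa y ^+ 2.
Definition Bb y := sb y ^+ 2.

Lemma PD_Aa i x : SS x != 0 -> PD i Aa x (du i (2 * al) (kk * QQ x / 3) * Aa x).
Proof.
move=> hS; have H := PD_mul (PD_sa i hS) (PD_sa i hS).
apply: PD_eq; first exact: H.
rewrite /du /Aa; case: (i == i4) => /=; first ring. by case: (i == i8) => /=; field.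
Qed.

Lemma PD_Bb i x : SS x != 0 -> PD i Bb x (du i (- (2 * al)) (kk * QQ x / 3) * Bb x).
Proof.
move=> hS; have H := PD_mul (PD_sb i hS) (PD_sb i hS).
apply: PD_eq; first exact: H.
rewrite /du /Bb; case: (i == i4) => /=; first ring. by case: (i == i8) => /=; field.
Qed.


Lemma nat_eqbE n m : Nat.eqb n m = (n == m)%N.
Proof. by elim: n m => [|n IH] [|m] //=; rewrite IH eqSS. Qed.

Lemma nat_lebE n m : Nat.leb n m = (n <= m)%N.
Proof. by elim: n m => [|n IH] [|m] //=; rewrite IH ltnS. Qed.

Lemma nat_ltbE n m : Nat.ltb n m = (n < m)%N.
Proof. by rewrite /Nat.ltb nat_lebE. Qed.

Lemma ord_eqb (i j : 'I_8) : (i == j) = Nat.eqb (val i) (val j).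
Proof. by rewrite nat_eqbE. Qed.

Lemma i4_eqb (i : 'I_8) : (i == i4) = Nat.eqb (val i) 3.
Proof. by rewrite ord_eqb /i4 /= inordK. Qed.

Lemma i8_eqb (i : 'I_8) : (i == i8) = Nat.eqb (val i) 7.
Proof. by rewrite ord_eqb /i8 /= inordK. Qed.

Lemma eqb37 n : Nat.eqb n 3 = true -> Nat.eqb n 7 = false.
Proof. by rewrite !nat_eqbE => /eqP ->. Qed.

Lemma g_entry y (s n : 'I_8) :
  sol_metric L a0 b0 eps y s n = if s == n then gdN (Aa y) (Bb y) (val s) else 0.
Proof.
rewrite /sol_metric mxE; case: (s == n) => //.
by rewrite /gdN !nat_ltbE nat_eqbE.
Qed.

Lemma PD_if i (b : bool) (F : 'rV[R]_8 -> R) x dF :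
  PD i F x dF -> PD i (fun y => if b then F y else 0) x (if b then dF else 0).
Proof. by case: b => // _; exact: PD_cst. Qed.

Ltac split_i i :=
  rewrite /du /dl ?i4_eqb ?i8_eqb;
  let E3 := fresh "E3" in
  case E3: (Nat.eqb (val i) 3); [rewrite ?(eqb37 E3) | case: (Nat.eqb (val i) 7)] => /=.

Lemma PD_gd i (n : nat) x : SS x != 0 ->
  PD i (fun y => gdN (Aa y) (Bb y) n) x (dgdN (Aa x) (Bb x) kk (QQ x) al (val i) n).
Proof.
move=> hS; rewrite /gdN /dgdN.
case: n => [|[|[|[|[|[|[|n]]]]]]] /=.
all: try (apply: PD_eq; first exact: PD_cst; by split_i i).
all: try (apply: PD_eq; first exact: (PD_Aa i hS); by split_i i; field).
all: try (apply: PD_eq; first exact: (PD_opp (PD_Bb i hS)); by split_i i; field).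
Qed.


Lemma PD_dgd i (m n : nat) x : SS x != 0 ->
  PD i (fun y => dgdN (Aa y) (Bb y) kk (QQ y) al m n) x
     (ddgdN (Aa x) (Bb x) kk (QQ x) al (val i) m n).
Proof.
move=> hS; rewrite /dgdN /ddgdN.
case: (Nat.eqb m 3); last case: (Nat.eqb m 7).
all: case: n => [|[|[|[|[|[|[|n]]]]]]] /=.
all: try (apply: PD_eq; first exact: PD_cst; by split_i i).
all: try (apply: PD_eq; first exact: (PD_mul (PD_cst i (2*al) x) (PD_Aa i hS)); by split_i i; field).
all: try (apply: PD_eq; first exact: (PD_mul (PD_cst i (2*al) x) (PD_Bb i hS)); by split_i i; field).
all: try (apply: PD_eq; first exact: (PD_mul (PD_mul (PD_mul (PD_cst i kk x) (PD_Q i hS)) (PD_cst i 3^-1 x)) (PD_Aa i hS)); by split_i i; field).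
all: try (apply: PD_eq; first exact: (PD_opp (PD_mul (PD_mul (PD_mul (PD_cst i kk x) (PD_Q i hS)) (PD_cst i 3^-1 x)) (PD_Bb i hS))); by split_i i; field).
Qed.


Lemma gdN_neq0 (A B : R) n : A != 0 -> B != 0 -> gdN A B n != 0.
Proof.
move=> hA hB; rewrite /gdN; case: (Nat.ltb n 3) => //; case: (Nat.eqb n 3).
  by rewrite oppr_eq0 oner_eq0.
by case: (Nat.ltb n 7); rewrite ?oppr_eq0 ?oner_eq0.
Qed.

Lemma PD_GN i (l m n : nat) x : SS x != 0 -> Aa x != 0 -> Bb x != 0 ->
  PD i (fun y => GN (Aa y) (Bb y) kk (QQ y) al l m n) x
     (dGN (Aa x) (Bb x) kk (QQ x) al (val i) l m n).
Proof.
move=> hS hA hB; rewrite /GN /dGN /brk /dbrk.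
have hg := gdN_neq0 l hA hB.
have h2 : 2 * gdN (Aa x) (Bb x) l != 0 by rewrite mulf_neq0 // pnatr_eq0.
have H := PD_mul (PD_inv h2 (PD_mul (PD_cst i 2 x) (PD_gd i l hS)))
  (PD_sub (PD_add (PD_if (Nat.eqb l n) (PD_dgd i m l hS)) (PD_if (Nat.eqb l m) (PD_dgd i n l hS)))
      (PD_if (Nat.eqb m n) (PD_dgd i l m hS))).
apply: PD_eq; first exact: H.
rewrite mul0r add0r mulNr; congr (_ * _ + _).
by rewrite mulrC -mulNr.
Qed.


Lemma U_near c x : SS x != 0 -> \forall t \near (0:R), SS (x + t *: ev c) != 0.
Proof.
move=> hS.
have D : derivable (fun t : R => SS (x + t *: ev c)) 0 1 := PD_derivable (PD_S c x).
have C := differentiable_continuous ((derivable1_diffP _ _).1 D).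
have H := cvgr_neq0 _ C. rewrite /= line0 in H. exact: H.
Qed.

Lemma sa_gt0 y : SS y != 0 -> 0 < sa y.
Proof.
move=> hS; rewrite saE !mulr_gt0 ?expR_gt0 //.
by apply: powR_gt0; rewrite exprn_even_gt0.
Qed.

Lemma sb_gt0 y : SS y != 0 -> 0 < sb y.
Proof.
move=> hS; rewrite sbE !mulr_gt0 ?expR_gt0 //.
by apply: powR_gt0; rewrite exprn_even_gt0.
Qed.

Lemma Aa_neq0 y : SS y != 0 -> Aa y != 0.
Proof. by move=> hS; rewrite /Aa expf_neq0 // gt_eqF // sa_gt0. Qed.

Lemma Bb_neq0 y : SS y != 0 -> Bb y != 0.
Proof. by move=> hS; rewrite /Bb expf_neq0 // gt_eqF // sb_gt0. Qed.

Definition gmet := sol_metric L a0 b0 eps.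

Lemma metric_diag y : gmet y = diag_mx (\row_(i < 8) gdN (Aa y) (Bb y) (val i)).
Proof.
apply/matrixP => i j; rewrite /gmet g_entry !mxE.
by case: (i == j); rewrite ?mulr1n ?mulr0n.
Qed.

Lemma ginv_entry y (l s : 'I_8) : SS y != 0 ->
  ginv gmet y l s = if l == s then (gdN (Aa y) (Bb y) (val l))^-1 else 0.
Proof.
move=> hS; have hA := Aa_neq0 hS; have hB := Bb_neq0 hS.
set M := gmet y.
set N : 'M[R]_8 := diag_mx (\row_(i < 8) (gdN (Aa y) (Bb y) (val i))^-1).
have MN : M *m N = 1%:M.
  rewrite /M metric_diag mul_diag_mx; apply/matrixP => i j; rewrite !mxE.
  case: (i == j); rewrite ?mulr1n ?mulr0n ?mulr0 //.
  by rewrite divff // gdN_neq0.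
have [uM _] := mulmx1_unit MN.
have -> : ginv gmet y = N.
  by rewrite /ginv -/M -[RHS]mul1mx -(mulVmx uM) -mulmxA MN mulmx1.
by rewrite /N !mxE; case: (l == s); rewrite ?mulr1n ?mulr0n.
Qed.

Lemma dg_val y (m s n : 'I_8) : SS y != 0 ->
  partial m (fun z => gmet z s n) y =
  if s == n then dgdN (Aa y) (Bb y) kk (QQ y) al (val m) (val s) else 0.
Proof.
move=> hS.
have -> : (fun z => gmet z s n) = (fun z => if s == n then gdN (Aa z) (Bb z) (val s) else 0).
  by apply/funext => z; rewrite /gmet g_entry.
by apply: PD_partial; apply: PD_if; apply: PD_gd.
Qed.

Lemma chr_val y (l m n : 'I_8) : SS y != 0 ->
  christoffel gmet l m n y = GN (Aa y) (Bb y) kk (QQ y) al (val l) (val m) (val n).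
Proof.
move=> hS; rewrite /christoffel.
under eq_bigr => s _ do rewrite ginv_entry // !dg_val //.
rewrite (bigD1 l) //= big1 ?addr0; last first.
  by move=> s /negPf; rewrite eq_sym => ->; rewrite mul0r.
rewrite eqxx /GN /brk !ord_eqb invfM mulrA.
by [].
Qed.


Definition rr : R := Num.sqrt (L / 2).

Lemma kk_rr : kk = 2 * rr.
Proof.
rewrite /kk /rr; have -> : 2 * L = 2 ^+ 2 * (L / 2) by field.
by rewrite sqrtrM ?sqrtr_sqr ?ger0_norm // exprn_ge0.
Qed.

Lemma rr2 : rr ^+ 2 = L / 2.
Proof. by rewrite /rr sqr_sqrtr // divr_ge0 // ltW. Qed.

Lemma al_rr : eps = 1 \/ eps = -1 -> al = rr / 3 \/ al = - (rr / 3).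
Proof.
rewrite /al -/rr; case=> ->; [left | right]; ring.
Qed.

Lemma big8 (F : nat -> R) : \sum_(l < 8) F (val l) = sum8 F.
Proof. by rewrite !big_ord_recr big_ord0 /= add0r. Qed.

Lemma PD_chr c (l m n : 'I_8) x : SS x != 0 ->
  PD c (christoffel gmet l m n) x
     (dGN (Aa x) (Bb x) kk (QQ x) al (val c) (val l) (val m) (val n)).
Proof.
move=> hS; apply: (@PD_near _ _ (fun y => GN (Aa y) (Bb y) kk (QQ y) al (val l) (val m) (val n))).
  by apply: filterS (U_near c hS) => t ht; rewrite chr_val.
exact: PD_GN (Aa_neq0 hS) (Bb_neq0 hS).
Qed.

Lemma riem_val (a b c d : 'I_8) x : SS x != 0 ->
  riemann gmet a b c d x =
  RiemN (Aa x) (Bb x) kk (QQ x) al (val a) (val b) (val c) (val d).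
Proof.
move=> hS; rewrite /riemann !(PD_partial (PD_chr _ _ _ _ hS)).
under eq_bigr => l _ do rewrite !chr_val //.
by rewrite (big8 (fun l => GN (Aa x) (Bb x) kk (QQ x) al (val a) (val c) l *
   GN (Aa x) (Bb x) kk (QQ x) al l (val b) (val d) -
   GN (Aa x) (Bb x) kk (QQ x) al (val a) (val d) l *
   GN (Aa x) (Bb x) kk (QQ x) al l (val b) (val c))).
Qed.

Lemma ricci_val (b d : 'I_8) x : SS x != 0 -> eps = 1 \/ eps = -1 ->
  ricci gmet b d x = RicC (Aa x) (Bb x) rr (QQ x) (val b) (val d).
Proof.
move=> hS he; rewrite /ricci.
under eq_bigr => a _ do rewrite riem_val //.
rewrite (big8 (fun a => RiemN (Aa x) (Bb x) kk (QQ x) al a (val b) a (val d))).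
apply: ric_all; [exact: Aa_neq0 | exact: Bb_neq0 | exact: kk_rr | exact: al_rr | exact: ltn_ord | exact: ltn_ord].
Qed.


Definition Phd y := sigma * Num.sqrt (5 / 6) * kk / SS y.

Lemma sin_half y : SS y = 2 * sin (2^-1 * sol_theta L y) * cos (2^-1 * sol_theta L y).
Proof.
rewrite /SS; set w := 2^-1 * sol_theta L y.
have -> : sol_theta L y = w + w by rewrite /w; field.
by rewrite sinD; ring.
Qed.

Lemma PD_phi i y : SS y != 0 -> PD i (sol_phi L sigma) y (dl i i8 (Phd y)).
Proof.
move=> hS; have := hS; rewrite sin_half => hS'.
have hc : cos (2^-1 * sol_theta L y) != 0 by move: hS'; rewrite mulf_eq0 negb_or => /andP[].
have hs : sin (2^-1 * sol_theta L y) != 0.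
  by move: hS'; rewrite !mulf_eq0 !negb_or => /andP[/andP[]].
have ht : 0 < tan (2^-1 * sol_theta L y) ^+ 2.
  by rewrite exprn_even_gt0 //= /tan mulf_neq0 ?invr_eq0.
have T := PD_comp (PD_mul (PD_cst i 2^-1 y) (PD_theta i y)) (is_derive_tan hc).
have H := PD_mul (PD_cst i (sigma * 2^-1 * Num.sqrt (5/6)) y) (PD_comp (PD_mul T T) (is_derive1_ln ht)).
apply: PD_eq; first exact: H.
rewrite /dl /Phd; case: (i == i8); last by ring.
by rewrite sin_half /tan; field; rewrite hs hc.
Qed.

Lemma dphi_val (n : 'I_8) y : SS y != 0 -> partial n (sol_phi L sigma) y = dl n i8 (Phd y).
Proof. by move=> hS; apply: PD_partial; apply: PD_phi. Qed.

Lemma Phd2 x : SS x != 0 -> sigma = 1 \/ sigma = -1 ->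
  Phd x ^+ 2 = 5 * (2 * rr ^+ 2) / 3 * (1 + QQ x ^+ 2).
Proof.
move=> hS hs.
have hsg : sigma ^+ 2 = 1 by case: hs => ->; rewrite ?expr1n ?sqrrN ?expr1n.
have h56 : Num.sqrt (5 / 6) ^+ 2 = 5 / 6 :> R by rewrite sqr_sqrtr // divr_ge0.
have hcs := cos2Dsin2 (sol_theta L x).
rewrite /Phd /QQ kk_rr -/(CC x) -/(SS x) in hcs *.
rewrite !exprMn_comm ?expr_div_n; try exact: mulrC.
rewrite hsg h56.
have -> : CC x ^+ 2 = 1 - SS x ^+ 2 by rewrite -hcs; ring.
by field.
Qed.


Definition SCv x := 8 * (2 * rr ^+ 2 / 3) + 5 * (2 * rr ^+ 2) / 3 * (1 + QQ x ^+ 2).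

Lemma scal_val x : SS x != 0 -> eps = 1 \/ eps = -1 -> scalar_curv gmet x = SCv x.
Proof.
move=> hS he; have hA := Aa_neq0 hS; have hB := Bb_neq0 hS.
rewrite /scalar_curv.
under eq_bigr => m _ do under eq_bigr => n _ do rewrite ginv_entry // ricci_val // ord_eqb.
rewrite !big_ord_recr !big_ord0 /=.
cbv beta iota zeta delta [RicC gdN Nat.eqb Nat.ltb Nat.leb andb].
rewrite /SCv; by field; rewrite hA hB.
Qed.

Lemma K_val x : SS x != 0 ->
  \sum_(a < 8) \sum_(b < 8) ginv gmet x a b * partial a (sol_phi L sigma) x * partial b (sol_phi L sigma) x
  = Phd x ^+ 2.
Proof.
move=> hS; have hA := Aa_neq0 hS; have hB := Bb_neq0 hS.
under eq_bigr => m _ do under eq_bigr => n _ do rewrite ginv_entry // !dphi_val // /dl ord_eqb !i8_eqb.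
rewrite !big_ord_recr !big_ord0 /=.
cbv beta iota zeta delta [gdN Nat.eqb Nat.ltb Nat.leb andb].
by field; rewrite hA hB.
Qed.

Lemma einstein_ok x (m n : 'I_8) : SS x != 0 -> eps = 1 \/ eps = -1 -> sigma = 1 \/ sigma = -1 ->
  einstein gmet m n x + L * gmet x m n = stress gmet (sol_phi L sigma) m n x.
Proof.
move=> hS he hs; have hA := Aa_neq0 hS; have hB := Bb_neq0 hS.
rewrite /einstein /stress ricci_val // scal_val // K_val // !dphi_val // /gmet !g_entry Phd2 //.
have hP : Phd x * Phd x = 5 * (2 * rr ^+ 2) / 3 * (1 + QQ x ^+ 2) by rewrite -expr2 Phd2.
have hL2 : L = 2 * rr ^+ 2 by rewrite rr2; field.
rewrite /dl !i8_eqb !ord_eqb /SCv hL2.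
have hm : (val m < 8)%N := ltn_ord m; have hn : (val n < 8)%N := ltn_ord n.
move: hm hn; move: (val m) (val n) => {m n} m n.
case: m => [|[|[|[|[|[|[|[|m]]]]]]]] // _; case: n => [|[|[|[|[|[|[|[|n]]]]]]]] // _.
all: cbv beta iota zeta delta [RicC gdN Nat.eqb Nat.ltb Nat.leb andb].
all: rewrite ?hP.
all: by field; rewrite ?hA ?hB.
Qed.


Lemma sqrtdet y : SS y != 0 -> Num.sqrt `|\det (gmet y)| = (sa y * sb y) ^+ 3.
Proof.
move=> hS; rewrite metric_diag det_diag !big_ord_recr big_ord0 /= !mxE /=.
cbv beta iota zeta delta [gdN Nat.eqb Nat.ltb Nat.leb andb].
have -> : 1 * Aa y * Aa y * Aa y * -1 * - Bb y * - Bb y * - Bb y * 1 = ((sa y * sb y) ^+ 3) ^+ 2.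
  by rewrite /Aa /Bb; ring.
rewrite ger0_norm ?sqr_ge0 // sqrtr_sqr ger0_norm //.
by rewrite exprn_ge0 // mulr_ge0 // ltW ?sa_gt0 ?sb_gt0.
Qed.

Lemma inner_val y (m : 'I_8) : SS y != 0 ->
  \sum_(n < 8) ginv gmet y m n * partial n (sol_phi L sigma) y = if m == i8 then Phd y else 0.
Proof.
move=> hS.
under eq_bigr => n _ do rewrite ginv_entry // dphi_val //.
rewrite (bigD1 m) //= big1 ?addr0; last first.
  by move=> n /negPf; rewrite eq_sym => ->; rewrite mul0r.
rewrite eqxx /dl; case: eqP => [->|_]; last by rewrite mulr0.
by rewrite /i8 inordK // /gdN /= invr1 mul1r.
Qed.

Definition Wf y := sa y * sb y * (sa y * sb y * (sa y * sb y)) * Phd y.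

Lemma PD_Wf i x : SS x != 0 -> PD i Wf x 0.
Proof.
move=> hS.
have P := PD_mul (PD_cst i (sigma * Num.sqrt (5/6) * kk) x) (PD_inv hS (PD_S i x)).
have D := PD_mul (PD_sa i hS) (PD_sb i hS).
have H := PD_mul (PD_mul D (PD_mul D D)) P.
apply: PD_eq; first exact: H.
rewrite /QQ; split_i i; by field.
Qed.

Lemma box_ok x : SS x != 0 -> box gmet (sol_phi L sigma) x = 0.
Proof.
move=> hS; rewrite /box big1 ?mulr0 // => m _.
apply: PD_partial.
apply: (@PD_near _ _ (fun y => if m == i8 then Wf y else 0)).
  apply: filterS (U_near m hS) => t ht; rewrite inner_val // sqrtdet //.
  by case: (m == i8); rewrite ?mulr0 // /Wf; ring.
by apply: PD_eq; first apply: PD_if (PD_Wf m hS); case: (m == i8).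
Qed.


Lemma UE y : sol_U L y <-> SS y != 0.
Proof. by []. Qed.

Lemma reg_g (m n : 'I_8) : twice_partially_derivable_on (sol_U L) (fun y => gmet y m n).
Proof.
move=> x /UE hS i j.
have -> : (fun y => gmet y m n) = (fun y => if m == n then gdN (Aa y) (Bb y) (val m) else 0).
  by apply/funext => z; rewrite /gmet g_entry.
split; first exact/PD_derivable/PD_if/PD_gd.
apply: PD_derivable; apply: (@PD_near _ _ (fun y => if m == n then dgdN (Aa y) (Bb y) kk (QQ y) al (val j) (val m) else 0)).
  apply: filterS (U_near i hS) => t ht.
  by rewrite -(dg_val j m n ht) /gmet; congr partial; apply/funext => z; rewrite g_entry.
exact/PD_if/PD_dgd.
Qed.

Lemma PD_Phd i x : SS x != 0 -> PD i Phd x (- (SS x) ^- 2 * dl i i8 (kk * CC x) * (sigma * Num.sqrt (5/6) * kk)).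
Proof.
move=> hS; apply: PD_eq; first exact: (PD_mul (PD_cst i (sigma * Num.sqrt (5/6) * kk) x) (PD_inv hS (PD_S i x))).
by rewrite mul0r add0r mulrC.
Qed.

Lemma reg_phi : twice_partially_derivable_on (sol_U L) (sol_phi L sigma).
Proof.
move=> x /UE hS i j; split; first exact/PD_derivable/PD_phi.
apply: PD_derivable; apply: (@PD_near _ _ (fun y => if j == i8 then Phd y else 0)).
  by apply: filterS (U_near i hS) => t ht; rewrite dphi_val.
exact/PD_if/PD_Phd.
Qed.

Lemma rate_ok x : SS x != 0 ->
  2^-1 * partial i4 (fun y => ln (sol_b L b0 eps y / sol_a L a0 eps y)) x
  = - eps * 3^-1 * Num.sqrt (L / 2).
Proof.
move=> hS; have ha := sa_gt0 hS; have hb := sb_gt0 hS.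
have hq : 0 < sb x / sa x by rewrite divr_gt0.
have H := PD_comp (PD_mul (PD_sb i4 hS) (PD_inv (lt0r_neq0 ha) (PD_sa i4 hS))) (is_derive1_ln hq).
have -> : partial i4 (fun y => ln (sol_b L b0 eps y / sol_a L a0 eps y)) x = _ := PD_partial H.
rewrite /du eqxx /al; field.
by rewrite (lt0r_neq0 ha) (lt0r_neq0 hb).
Qed.


Lemma kk_gt0 : 0 < kk.
Proof. by rewrite /kk sqrtr_gt0 mulr_gt0. Qed.

Definition PP : R := pi * Num.sqrt (2 / L).

Lemma kP : kk * PP = pi *+ 2.
Proof.
rewrite /PP /kk mulrCA -sqrtrM ?mulr_ge0 ?ltW //.
have -> : 2 * L * (2 / L) = 2 ^+ 2 by field; rewrite lt0r_neq0.
by rewrite sqrtr_sqr ger0_norm // mulr_natr.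
Qed.

Lemma theta_shift x T : sol_theta L (x + T *: ev i8) = sol_theta L x + kk * T.
Proof. by rewrite /sol_theta ev_coord eqxx -/kk; ring. Qed.

Lemma i4_shift x T : (x + T *: ev i8) 0 i4 = x 0 i4.
Proof. by rewrite ev_coord eq_sym i48 addr0. Qed.

Lemma period_P x : SS x != 0 ->
  SS (x + PP *: ev i8) != 0 /\ sa (x + PP *: ev i8) = sa x /\
  sb (x + PP *: ev i8) = sb x /\ sol_phi L sigma (x + PP *: ev i8) = sol_phi L sigma x.
Proof.
move=> hS.
have hth : sol_theta L (x + PP *: ev i8) = sol_theta L x + pi *+ 2 by rewrite theta_shift kP.
have hs : SS (x + PP *: ev i8) = SS x by rewrite /SS hth sinD2pi.
split; first by rewrite hs.
split; first by rewrite !saE /E1 /Pw i4_shift hs.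
split; first by rewrite !sbE /E2 /Pw i4_shift hs.
rewrite /sol_phi hth.
have -> : 2^-1 * (sol_theta L x + pi *+ 2) = 2^-1 * sol_theta L x + pi by rewrite mulr2n; field.
by rewrite tanDpi.
Qed.

Lemma tan2E y : SS y != 0 ->
  1 + CC y != 0 /\ tan (2^-1 * sol_theta L y) ^+ 2 = (1 - CC y) / (1 + CC y).
Proof.
move=> hS; have := hS; rewrite sin_half => hS'.
have hc : cos (2^-1 * sol_theta L y) != 0 by move: hS'; rewrite mulf_eq0 negb_or => /andP[].
set w := 2^-1 * sol_theta L y.
have hC : CC y = cos w ^+ 2 - sin w ^+ 2.
  rewrite /CC; have -> : sol_theta L y = w + w by rewrite /w; field.
  by rewrite cosD; ring.
have hsc := cos2Dsin2 w.
have h1 : 1 + CC y = 2 * cos w ^+ 2 by rewrite hC sin2cos2; ring.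
have h2 : 1 - CC y = 2 * sin w ^+ 2 by rewrite hC cos2sin2; ring.
split; first by rewrite h1 mulf_neq0 // expf_neq0.
by rewrite h1 h2 /tan; field.
Qed.

Lemma phi_eq_cos y z : SS y != 0 -> SS z != 0 -> sigma = 1 \/ sigma = -1 ->
  sol_phi L sigma y = sol_phi L sigma z -> CC y = CC z.
Proof.
move=> hy hz hs; rewrite /sol_phi.
have hc : sigma * 2^-1 * Num.sqrt (5 / 6) != 0.
  rewrite !mulf_neq0 // ?invr_eq0 ?pnatr_eq0 // ?sqrtr_eq0 -?ltNge ?divr_gt0 //.
  by case: hs => ->; rewrite ?oppr_eq0 oner_eq0.
move/(mulfI hc).
have tpos u : SS u != 0 -> tan (2^-1 * sol_theta L u) ^+ 2 \in Num.pos.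
  move=> hu; have := hu; rewrite sin_half => hu'.
  have hc' : cos (2^-1 * sol_theta L u) != 0 by move: hu'; rewrite mulf_eq0 negb_or => /andP[].
  have hs' : sin (2^-1 * sol_theta L u) != 0.
    by move: hu'; rewrite !mulf_eq0 !negb_or => /andP[/andP[]].
  by rewrite posrE exprn_even_gt0 //= /tan mulf_neq0 ?invr_eq0.
move/(ln_inj (tpos _ hy) (tpos _ hz)).
have [hy1 ty] := tan2E hy; have [hz1 tz] := tan2E hz.
rewrite ty tz => /eqP; rewrite eqr_div // => /eqP E.
nra.
Qed.



Definition pt (t0 : R) : 'rV[R]_8 := (t0 / kk) *: ev i8.

Lemma theta_pt t0 : sol_theta L (pt t0) = t0.
Proof.
rewrite /sol_theta /pt /ev !mxE !eqxx /= mulr1 -/kk.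
by field; rewrite lt0r_neq0 // kk_gt0.
Qed.

Lemma no_smaller T : 0 < T -> T < PP -> sigma = 1 \/ sigma = -1 ->
  ~ (forall x, SS x != 0 ->
       SS (x + T *: ev i8) != 0 /\ sol_phi L sigma (x + T *: ev i8) = sol_phi L sigma x).
Proof.
move=> T0 TP hs H.
set be := kk * T.
have be0 : 0 < be by rewrite mulr_gt0 // kk_gt0.
have be2 : be < pi *+ 2 by rewrite -kP /be ltr_pM2l // kk_gt0.
have key t0 : sin t0 != 0 -> cos (t0 + be) = cos t0.
  move=> ht; have hp : SS (pt t0) != 0 by rewrite /SS theta_pt.
  have [hU hph] := H _ hp.
  by have := phi_eq_cos hU hp hs hph; rewrite /CC theta_shift theta_pt.
have pi0 := pi_gt0 R.
have s1 : sin be = 0.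
  have := key (pi / 2); rewrite sin_pihalf oner_eq0 cos_pihalf addrC cosDpihalf => /(_ isT).
  by move/eqP; rewrite oppr_eq0 => /eqP.
have sp4 : 0 < sin (pi / 4 : R) by apply: (@sin_gt0_pi R); apply/andP; split; lra.
have cp4 : 0 < cos (pi / 4 : R) by apply: (@cos_gt0_pihalf R); apply/andP; split; lra.
have c1 : cos be = 1.
  have := key (pi / 4) (lt0r_neq0 sp4); rewrite cosD s1 mulr0 subr0 => E.
  by apply: (mulfI (lt0r_neq0 cp4)); rewrite E mulr1.
have sh : 0 < sin (be / 2) by apply: (@sin_gt0_pi R); apply/andP; split; lra.
have : cos be = 1 - 2 * sin (be / 2) ^+ 2.
  set h := be / 2; have -> : be = h + h by rewrite /h; field.
  by rewrite cosD -!expr2 cos2sin2; ring.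
rewrite c1 => E; have : sin (be / 2) ^+ 2 = 0 by lra.
by move/eqP; rewrite expf_eq0 /= (negbTE (lt0r_neq0 sh)).
Qed.

Lemma P2pi : PP = pi *+ 2 <-> L = 2^-1.
Proof.
have pi0 := pi_gt0 R.
rewrite /PP; split => [E | ->].
  have h : Num.sqrt (2 / L) = 2.
    by apply: (mulfI (lt0r_neq0 pi0)); rewrite E mulr_natr.
  have : 2 / L = 4 by rewrite -(sqr_sqrtr (a := 2 / L)) ?divr_ge0 ?ltW // h; ring.
  move=> E2; have hL0 : L != 0 := lt0r_neq0 hL.
  have h4 : 2 = L * 4 by rewrite -E2; field.
  have -> : L = (L * 4) / 4 by field.
  by rewrite -h4; field.
have -> : 2 / 2^-1 = 2 ^+ 2 :> R by field.
by rewrite sqrtr_sqr ger0_norm // mulr_natr.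
Qed.


Lemma main_sec (heps : eps = 1 \/ eps = -1) (hsigma : sigma = 1 \/ sigma = -1) :
  let g := sol_metric L a0 b0 eps in
  let phi := sol_phi L sigma in
  let a := sol_a L a0 eps in
  let b := sol_b L b0 eps in
  let U := sol_U L in
  let P := pi * Num.sqrt (2 / L) in
  let periodic_with (T : R) :=
    forall x, U x -> U (x + T *: ev i8) /\
      a (x + T *: ev i8) = a x /\ b (x + T *: ev i8) = b x /\
      phi (x + T *: ev i8) = phi x in
  (forall m n : 'I_8, twice_partially_derivable_on U (fun y => g y m n))
  /\ twice_partially_derivable_on U phi
  /\ (forall x, U x -> forall m n : 'I_8,
        einstein g m n x + L * g x m n = stress g phi m n x)
  /\ (forall x, U x -> box g phi x = 0)
  /\ (forall x, U x ->
        2^-1 * partial i4 (fun y => ln (b y / a y)) x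
        = - eps * 3^-1 * Num.sqrt (L / 2))
  /\ periodic_with P
  /\ (forall T, 0 < T -> T < P -> ~ periodic_with T)
  /\ (P = 2 * pi <-> L = 2^-1).
Proof.
move=> g phi a b U P pw.
split; first exact: reg_g.
split; first exact: reg_phi.
split; first by move=> x /UE hS m n; apply: einstein_ok.
split; first by move=> x /UE hS; apply: box_ok.
split; first by move=> x /UE hS; apply: rate_ok.
split.
  move=> x /UE hS; have [h1 [h2 [h3 h4]]] := period_P hS.
  by split; [exact/UE | split; [exact: h2 | split; [exact: h3 | exact: h4]]].
split.
  move=> T T0 TP Hp; apply: (no_smaller T0 TP hsigma) => x hS.
  have [hU [_ [_ hph]]] := Hp x hS.
  by split; [exact: hU | exact: hph].
by rewrite mulr_natl; exact: P2pi.
Qed.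

End Sol.

Unset Implicit Arguments.

Theorem mainTheorem1 (R : realType) (L a0 b0 eps sigma : R)
  (hL : 0 < L) (ha0 : 0 < a0) (hb0 : 0 < b0)
  (heps : eps = 1 \/ eps = -1) (hsigma : sigma = 1 \/ sigma = -1) :
  let g := sol_metric L a0 b0 eps in
  let phi := sol_phi L sigma in
  let a := sol_a L a0 eps in
  let b := sol_b L b0 eps in
  let U := sol_U L in
  let P := pi * Num.sqrt (2 / L) in
  let periodic_with (T : R) :=
    forall x, U x -> U (x + T *: ev i8) /\
      a (x + T *: ev i8) = a x /\ b (x + T *: ev i8) = b x /\
      phi (x + T *: ev i8) = phi x in
  (* regularity: all quantities are twice partially differentiable on U *)
  (forall m n : 'I_8, twice_partially_derivable_on U (fun y => g y m n))
  /\ twice_partially_derivable_on U phi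
  (* Einstein equations with cosmological constant *)
  /\ (forall x, U x -> forall m n : 'I_8,
        einstein g m n x + L * g x m n = stress g phi m n x)
  (* massless Klein-Gordon equation *)
  /\ (forall x, U x -> box g phi x = 0)
  (* relative expansion rate *)
  /\ (forall x, U x ->
        2^-1 * partial i4 (fun y => ln (b y / a y)) x
        = - eps * 3^-1 * Num.sqrt (L / 2))
  (* common minimal positive period in x^8 *)
  /\ periodic_with P
  /\ (forall T, 0 < T -> T < P -> ~ periodic_with T)
  /\ (P = 2 * pi <-> L = 2^-1).
Proof.
exact: (main_sec hL ha0 hb0 heps hsigma).
Qed.
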